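(* Let $M$ be a commutative and cocommutative Hopf algebra over $\mathbb{C}$, let $A$ be a commutative $\mathbb{C}$-algebra, let $r$ be an $A$-valued bicharacter on $M$, and let $s=r\circ r^{t}$ be its symmetrization. Then for all $a,b\in M$, \[ \mathrm{EQ}_{r}(ab)=\mathrm{EQ}_{r}(a)\bullet_{s}\mathrm{EQ}_{r}(b). \] In other words, $\mathrm{EQ}_r$ is a homomorphism from $(M\otimes A,\cdot)$ to $(M\otimes A,\bullet_s)$.
   Context: For a Hopf algebra $M$ with coproduct $\Delta$, counit $\eta$ and antipode $S$, Sweedler notation is used: $\Delta(a)=\sum a'\otimes a''$, $\Delta^2(a)=\sum a'\otimes a''\otimes a'''$ (summation signs omitted). An $A$-valued bicharacter on $M$ is a linear map $r:M\otimes M\to A$ such that for all $a,b,c\in M$: $r(1\otimes a)=\eta(a)=r(a\otimes 1)$, $r(ab\otimes c)=\sum r(a\otimes c')r(b\otimes c'')$, and $r(a\otimes bc)=\sum r(a'\otimes b)r(a''\otimes c)$. The convolution of bicharacters is $(r\circ t)(a\otimes b)=\sum r(a'\otimes b')t(a''\otimes b'')$, and $r^{t}(a\otimes b)=r(b\otimes a)$. A bicharacter $t$ is symmetric if $t=t^t$. The symmetrization of $r$ is $s=r\circ r^t$, i.e. $s(a\otimes b)=\sum r(a'\otimes b')r(b''\otimes a'')$. Write $M_A=M\otimes_{\mathbb{C}}A$ with the $A$-linear extension of the product of $M$. For a symmetric bicharacter $t$, the product $\bullet_t$ on $M_A$ is the $A$-bilinear extension of $a\bullet_t b=\sum a'b'\,t(a''\otimes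 b'')$ for $a,b\in M$. The map $\mathrm{EQ}_r:M\to M_A$ is $\mathrm{EQ}_r(m)=\sum r(m'\otimes m'')m'''$, extended $A$-linearly to $M_A$. *)

(* Defs.v *)
From mathcomp Require Import all_boot all_algebra complex.
From mathcomp Require Import reals Rstruct.
Set Implicit Arguments. Unset Strict Implicit. Unset Printing Implicit Defensive.
Import GRing.Theory.
Local Open Scope ring_scope.

Definition CC : fieldType := (Rdefinitions.R)[i].

(* ---------- Tensors without a tensor-product library ----------------------
   An element of U (x) W is represented by a finite list of pairs
   [:: (u_1,w_1); ...] standing for  sum_i u_i (x) w_i.  Two such lists
   represent the same tensor iff every C-bilinear map out of U x W (into any
   C-vector space V) takes the same value on them (universal property of the
   tensor product).  Same for triple tensors with trilinear maps. *)

Definition bilin (U W V : lmodType CC) (f : U -> W -> V) : Prop :=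
  (forall (c : CC) (x y : U) (w : W), f (c *: x + y) w = c *: f x w + f y w) /\
  (forall (c : CC) (u : U) (x y : W), f u (c *: x + y) = c *: f u x + f u y).

Definition trilin (U W X V : lmodType CC) (f : U -> W -> X -> V) : Prop :=
  (forall (c : CC) (x y : U) (w : W) (z : X),
      f (c *: x + y) w z = c *: f x w z + f y w z) /\
  (forall u : U, bilin (f u)).

Definition teq (U W : lmodType CC) (s t : seq (U * W)) : Prop :=
  forall (V : lmodType CC) (f : U -> W -> V), bilin f ->
    \sum_(p <- s) f p.1 p.2 = \sum_(p <- t) f p.1 p.2.

Definition teq3 (U W X : lmodType CC) (s t : seq (U * W * X)) : Prop :=
  forall (V : lmodType CC) (f : U -> W -> X -> V), trilin f ->
    \sum_(p <- s) f p.1.1 p.1.2 p.2 = \sum_(p <- t) f p.1.1 p.1.2 p.2.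

Section Hopf.
Variable M : comAlgType CC.
(* coproduct, given as a Sweedler representative: Delta a = sum_{p <- D a} p.1 (x) p.2 *)
Variable D : M -> seq (M * M).
Variable eps : M -> CC.
Variable S : M -> M.

(* (Delta (x) id) Delta a, as a list of triples  a' (x) a'' (x) a''' *)
Definition cop2 (a : M) : seq (M * M * M) :=
  flatten [seq [seq (q.1, q.2, p.2) | q <- D p.1] | p <- D a].

(* (id (x) Delta) Delta a *)
Definition cop2' (a : M) : seq (M * M * M) :=
  flatten [seq [seq (p.1, q.1, q.2) | q <- D p.2] | p <- D a].

Definition is_hopf : Prop :=
  (forall (c : CC) (x y : M),
     teq (D (c *: x + y)) ([seq (c *: p.1, p.2) | p <- D x] ++ D y)) /\
  (forall x y : M,
     teq (D (x * y)) [seq (p.1 * q.1, p.2 * q.2) | p <- D x, q <- D y]) /\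
  teq (D 1) [:: (1, 1)] /\
  (forall x : M, teq3 (cop2 x) (cop2' x)) /\
  (forall (c : CC) (x y : M), eps (c *: x + y) = c * eps x + eps y) /\
  (forall x y : M, eps (x * y) = eps x * eps y) /\ eps 1 = 1 /\
  (forall x : M, \sum_(p <- D x) eps p.1 *: p.2 = x /\
                 \sum_(p <- D x) eps p.2 *: p.1 = x) /\
  (forall (c : CC) (x y : M), S (c *: x + y) = c *: S x + S y) /\
  (forall x : M, \sum_(p <- D x) S p.1 * p.2 = eps x *: 1 /\
                 \sum_(p <- D x) p.1 * S p.2 = eps x *: 1).

Definition cocommutative : Prop :=
  forall x : M, teq (D x) [seq (p.2, p.1) | p <- D x].

Variable A : comAlgType CC.

(* r : M (x) M -> A, given as a C-bilinear map M -> M -> A *)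
Definition is_bicharacter (r : M -> M -> A) : Prop :=
  [/\ bilin r,
      (forall x : M, r 1 x = (eps x)%:A /\ r x 1 = (eps x)%:A),
      (forall x y z : M, r (x * y) z = \sum_(p <- D z) r x p.1 * r y p.2) &
      (forall x y z : M, r x (y * z) = \sum_(p <- D x) r p.1 y * r p.2 z)].

Definition bconv (r t : M -> M -> A) : M -> M -> A :=
  fun x y => \sum_(p <- D x) \sum_(q <- D y) r p.1 q.1 * t p.2 q.2.

Definition btr (r : M -> M -> A) : M -> M -> A := fun x y => r y x.

Definition symmetrization (r : M -> M -> A) : M -> M -> A := bconv r (btr r).

(* Elements of M_A = M (x)_C A are lists of pairs (m, alpha) = sum m (x) alpha. *)
Definition teqMA (s t : seq (M * A)) : Prop := teq s t.

Definition EQ (r : M -> M -> A) (m : M) : seq (M * A) :=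
  [seq (w.2, r w.1.1 w.1.2) | w <- cop2 m].

(* the product bullet_t on M_A: A-bilinear extension of
   x bullet_t y = sum x' y' t(x'' (x) y''), i.e.
   (x (x) alpha) bullet_t (y (x) beta) = sum x'y' (x) alpha beta t(x'' (x) y'') *)
Definition bullet (t : M -> M -> A) (X Y : seq (M * A)) : seq (M * A) :=
  flatten [seq flatten [seq [seq (p.1 * q.1, u.2 * v.2 * t p.2 q.2)
                                | p <- D u.1, q <- D v.1]
                           | v <- Y]
          | u <- X].

End Hopf.

(* Main.v *)
Require Import Defs.
From mathcomp Require Import all_boot all_algebra complex.
From mathcomp Require Import reals Rstruct ring.
Set Implicit Arguments. Unset Strict Implicit. Unset Printing Implicit Defensive.
Import GRing.Theory.
Local Open Scope ring_scope.

Definition lin (U W : lmodType CC) (g : U -> W) :=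
  forall (c : CC) (x y : U), g (c *: x + y) = c *: g x + g y.

Section LinFacts.
Variables U W : lmodType CC.
Implicit Types g : U -> W.

Lemma lin0 g : lin g -> g 0 = 0.
Proof.
move=> h; have E := h 1 0 0; rewrite scale1r addr0 scale1r in E.
by apply: (addrI (g 0)); rewrite addr0 -E.
Qed.

Lemma linD g : lin g -> forall x y, g (x + y) = g x + g y.
Proof. by move=> h x y; have := h 1 x y; rewrite !scale1r. Qed.

Lemma linZ g : lin g -> forall c x, g (c *: x) = c *: g x.
Proof. by move=> h c x; rewrite -[c *: x]addr0 h lin0 // addr0. Qed.

Lemma lin_sum g I (s : seq I) (F : I -> U) : lin g ->
  g (\sum_(i <- s) F i) = \sum_(i <- s) g (F i).
Proof.
move=> h; elim: s => [|i s IH]; first by rewrite !big_nil lin0.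
by rewrite !big_cons linD // IH.
Qed.

Lemma lin_id : lin (fun x : U => x). Proof. by []. Qed.

Lemma lin_sumF I (s : seq I) (F : I -> U -> W) :
  (forall i, lin (F i)) -> lin (fun x => \sum_(i <- s) F i x).
Proof.
move=> h c x y; rewrite scaler_sumr -big_split /=.
by apply: eq_bigr => i _; rewrite h.
Qed.
End LinFacts.

Lemma bilinP (U W V : lmodType CC) (f : U -> W -> V) :
  (forall w, lin (fun x => f x w)) -> (forall u, lin (fun x => f u x)) -> bilin f.
Proof. by move=> h1 h2; split=> c x y w; [apply: h1|apply: h2]. Qed.

Lemma bilin_l (U W V : lmodType CC) (f : U -> W -> V) : bilin f -> forall w, lin (fun x => f x w).
Proof. by case=> h1 h2 w c x y; apply: h1. Qed.
Lemma bilin_r (U W V : lmodType CC) (f : U -> W -> V) : bilin f -> forall u, lin (fun x => f u x).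
Proof. by case=> h1 h2 u c x y; apply: h2. Qed.

Lemma lin_bl (U W X V : lmodType CC) (f : W -> X -> V) (h : U -> W) (w : X) :
  bilin f -> lin h -> lin (fun x => f (h x) w).
Proof. move=> hf hh c x y; by rewrite hh (bilin_l hf). Qed.
Lemma lin_br (U W X V : lmodType CC) (f : W -> X -> V) (h : U -> X) (w : W) :
  bilin f -> lin h -> lin (fun x => f w (h x)).
Proof. move=> hf hh c x y; by rewrite hh (bilin_r hf). Qed.

Lemma bilin_mul (R : comAlgType CC) : bilin (fun a b : R => a * b).
Proof.
apply: bilinP => w c x y; first by rewrite mulrDl scalerAl.
by rewrite mulrDr scalerAr.
Qed.

Lemma trilinP (U W X V : lmodType CC) (T : U -> W -> X -> V) :
  (forall w z, lin (fun x => T x w z)) -> (forall u z, lin (fun x => T u x z)) ->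
  (forall u w, lin (fun x => T u w x)) -> trilin T.
Proof.
move=> h1 h2 h3; split; first by move=> c x y w z; apply: h1.
by move=> u; apply: bilinP => ? ? ? ?; [apply: h2|apply: h3].
Qed.
Section Main.
Variables (M : comAlgType CC) (D : M -> seq (M * M)) (eps : M -> CC)
    (S : M -> M) (A : comAlgType CC) (r : M -> M -> A).
Hypothesis hH : is_hopf D eps S.
Hypothesis hC : cocommutative D.
Hypothesis hB : is_bicharacter D eps r.

Lemma hr : bilin r. Proof. by case: hB. Qed.

Lemma lin_Dsum (V : lmodType CC) (H : M * M -> V) :
  bilin (fun u w => H (u, w)) -> lin (fun x => \sum_(p <- D x) H p).
Proof.
move=> hG c x y; case: hH => Dl _.
have E z : \sum_(p <- D z) H p = \sum_(p <- D z) H (p.1, p.2) by apply: eq_bigr => -[].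
rewrite !E.
have := Dl c x y V (fun u w => H (u, w)) hG.
rewrite big_cat big_map /= => ->; rewrite scaler_sumr; congr (_ + _).
apply: eq_bigr => [[u w]] _ /=.
by rewrite (linZ (bilin_l hG w)).
Qed.

Lemma Dmul_sum (V : lmodType CC) (G : M -> M -> V) x y : bilin G ->
  \sum_(p <- D (x * y)) G p.1 p.2 =
  \sum_(p <- D x) \sum_(q <- D y) G (p.1 * q.1) (p.2 * q.2).
Proof.
move=> hG; case: hH => _ [Dm _].
by rewrite (Dm x y V G hG) big_allpairs_dep.
Qed.

Lemma coassN (V : lmodType CC) (T : M -> M -> M -> V) x : trilin T ->
  \sum_(p <- D x) \sum_(q <- D p.1) T q.1 q.2 p.2 =
  \sum_(p <- D x) \sum_(q <- D p.2) T p.1 q.1 q.2.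
Proof.
move=> hT; case: hH => _ [_ [_ [Dc _]]].
have := Dc x V T hT; rewrite /cop2 /cop2' !big_flatten /= !big_map.
by under eq_bigr do rewrite big_map; under [in RHS]eq_bigr do rewrite big_map.
Qed.

Lemma cocommN (V : lmodType CC) (G : M -> M -> V) x : bilin G ->
  \sum_(p <- D x) G p.1 p.2 = \sum_(p <- D x) G p.2 p.1.
Proof. move=> hG; have := hC x; move/(_ V G hG) ->; by rewrite big_map. Qed.


Ltac linsimp := cbv beta; cbn [fst snd].
Ltac linbil := first [exact: bilin_mul | assumption | exact: hr].
Ltac linsolve :=
  intros; linsimp;
  first
  [ exact: lin_id
  | apply: lin_Dsum; linsolve
  | apply: lin_sumF; linsolve
  | apply: bilinP; linsolve
  | apply: trilinP; linsolve
  | apply: lin_bl; [linbil | linsolve]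
  | apply: lin_br; [linbil | linsolve]
  | match goal with h : _ |- _ => exact: h end ].

Definition ml4 (V : lmodType CC) (F : M -> M -> M -> M -> V) :=
  [/\ forall b c d, lin (fun x => F x b c d), forall a c d, lin (fun x => F a x c d),
      forall a b d, lin (fun x => F a b x d) & forall a b c, lin (fun x => F a b c x)].

Definition B4 (V : lmodType CC) x (F : M -> M -> M -> M -> V) :=
  \sum_(p <- D x) \sum_(q <- D p.1) \sum_(t <- D p.2) F q.1 q.2 t.1 t.2.

Section B4L.
Variables (V : lmodType CC) (F : M -> M -> M -> M -> V).
Hypothesis hF : ml4 F.
Let h1 := let: And4 h _ _ _ := hF in h.
Let h2 := let: And4 _ h _ _ := hF in h.
Let h3 := let: And4 _ _ h _ := hF in h.
Let h4 := let: And4 _ _ _ h := hF in h.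

Lemma B4_swap1 x : B4 x F = B4 x (fun a b c d => F b a c d).
Proof.
apply: eq_bigr => p _.
apply: (cocommN (G := fun u w => \sum_(t <- D p.2) F u w t.1 t.2)); linsolve.
Qed.

Lemma B4_swap2 x : B4 x F = B4 x (fun a b c d => F a b d c).
Proof.
apply: eq_bigr => p _; apply: eq_bigr => q _.
apply: (cocommN (G := fun u w => F q.1 q.2 u w)); linsolve.
Qed.

Lemma B4_mid x : B4 x F = B4 x (fun a b c d => F a c b d).
Proof.
rewrite /B4.
transitivity (\sum_(p <- D x) \sum_(t <- D p.2) \sum_(q <- D p.1) F q.1 q.2 t.1 t.2).
  by apply: eq_bigr => p _; rewrite exchange_big.
rewrite -(coassN (T := fun X C E => \sum_(q <- D X) F q.1 q.2 C E)); last by linsolve.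
transitivity (\sum_(p <- D x) \sum_(s <- D p.1) \sum_(q <- D s.1) F q.1 s.2 q.2 p.2).
  apply: eq_bigr => p _ /=.
  rewrite (coassN (T := fun a b c => F a b c p.2)); last by linsolve.
  rewrite [RHS](coassN (T := fun a c b => F a b c p.2)); last by linsolve.
  apply: eq_bigr => s _ /=.
  apply: (cocommN (G := fun u w => F s.1 u w p.2)); linsolve.
rewrite (coassN (T := fun X Y Z => \sum_(q <- D X) F q.1 Y q.2 Z)); last by linsolve.
by apply: eq_bigr => p _; rewrite exchange_big.
Qed.
End B4L.

Definition PhiL x y := \sum_(t <- D (x * y)) r t.1 t.2.
Definition PhiR x y := \sum_(P <- D x) \sum_(U <- D P.1) \sum_(Q <- D y) \sum_(W <- D Q.1)
   r U.1 U.2 * r W.1 W.2 * symmetrization D r P.2 Q.2.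

Lemma hm1 x y z : r (x * y) z = \sum_(p <- D z) r x p.1 * r y p.2.
Proof. by case: hB. Qed.
Lemma hm2 x y z : r x (y * z) = \sum_(p <- D x) r p.1 y * r p.2 z.
Proof. by case: hB. Qed.

Lemma Dmul_r1 a b x y : \sum_(z <- D (x * y)) r z.1 a * r z.2 b =
  \sum_(z <- D x) \sum_(w <- D y) r (z.1 * w.1) a * r (z.2 * w.2) b.
Proof. apply: (Dmul_sum (G := fun u w => r u a * r w b)); linsolve. Qed.

Lemma PhiL_B4 x y : PhiL x y =
  B4 x (fun a b c d => B4 y (fun e g h k => r a c * r b h * (r e d * r g k))).
Proof.
rewrite /PhiL (Dmul_sum _ _ hr) /B4.
under eq_bigr => p _ do under eq_bigr => q _ do
  rewrite hm2 Dmul_r1.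
apply: eq_bigr => p _.
under eq_bigr => q _ do under eq_bigr => z _ do under eq_bigr => w _ do
  rewrite !hm1 big_distrl /=.
under eq_bigr => q _ do under eq_bigr => z _ do under eq_bigr => w _ do
  under eq_bigr => m _ do rewrite big_distrr /=.
rewrite exchange_big; apply: eq_bigr => z _.
rewrite [RHS]exchange_big; apply: eq_bigr => q _.
rewrite exchange_big; apply: eq_bigr => w _.
apply: eq_bigr => m _; apply: eq_bigr => n _.
ring.
Qed.

Lemma PhiR_B4 x y : PhiR x y =
  B4 x (fun a b c d => B4 y (fun e g h k => r a b * r e g * (r c h * r k d))).
Proof.
rewrite /PhiR /B4 /symmetrization /bconv /btr.
apply: eq_bigr => P _; apply: eq_bigr => U _.
under eq_bigr => Q _ do under eq_bigr => W _ do
  rewrite big_distrr /=.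
under eq_bigr => Q _ do under eq_bigr => W _ do
  under eq_bigr => m _ do rewrite big_distrr /=.
rewrite [RHS]exchange_big; apply: eq_bigr => Q _.
rewrite exchange_big; apply: eq_bigr => W _.
apply: eq_bigr => m _; apply: eq_bigr => n _.
ring.
Qed.

Lemma Phi_eq x y : PhiL x y = PhiR x y.
Proof.
rewrite PhiL_B4 PhiR_B4.
rewrite (B4_mid (F := fun a b c d => B4 y (fun e g h k => r a c * r b h * (r e d * r g k)))); last by split; rewrite /B4; linsolve.
apply: eq_bigr => p _; apply: eq_bigr => q _; apply: eq_bigr => t _.
set a := q.1; set b := q.2; set c := t.1; set d := t.2.
pose G := fun e g h k => r a b * r e g * (r c h * r k d).
transitivity (B4 y (fun e g h k => G g k h e)).
  apply: eq_bigr => p' _; apply: eq_bigr => q' _; apply: eq_bigr => t' _.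
  rewrite /G; ring.
have hG : ml4 G by rewrite /G; split; linsolve.
rewrite (B4_swap1 (F := fun e g h k => G g k h e)); last by rewrite /G; split; linsolve.
rewrite (B4_swap2 (F := fun e g h k => G e k h g)); last by rewrite /G; split; linsolve.
rewrite (B4_mid (F := fun e g h k => G e h k g)); last by rewrite /G; split; linsolve.
rewrite (B4_swap2 (F := fun e g h k => G e g k h)); last by rewrite /G; split; linsolve.
by [].
Qed.

Lemma move3 (V : lmodType CC) (T : M -> M -> M -> V) x : trilin T ->
  \sum_(P <- D x) \sum_(p <- D P.2) T P.1 p.1 p.2 =
  \sum_(p <- D x) \sum_(P <- D p.1) T P.1 p.2 P.2.
Proof.
move=> hT; case: (hT) => hT1 hT2.
transitivity (\sum_(P <- D x) \sum_(p <- D P.2) T P.1 p.2 p.1).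
  apply: eq_bigr => P _; apply: (cocommN (G := fun o z => T P.1 o z)).
  exact: hT2.
by rewrite -(coassN (T := fun X Y Z => T X Z Y)); last by
  apply: trilinP; [move=> w z c u v; apply: hT1 | move=> u z; exact: (bilin_r (hT2 u) z)
                        | move=> u w; exact: (bilin_l (hT2 u) w)].
Qed.

Lemma main_eq a b (V : lmodType CC) (f : M -> A -> V) : bilin f ->
  \sum_(p <- EQ D r (a * b)) f p.1 p.2 =
  \sum_(p <- bullet D (symmetrization D r) (EQ D r a) (EQ D r b)) f p.1 p.2.
Proof.
move=> hf.
transitivity (\sum_(p <- D a) \sum_(q <- D b) f (p.2 * q.2) (PhiL p.1 q.1)).
  rewrite /EQ /cop2 big_map big_flatten big_map /=.
  under eq_bigr do rewrite big_map /=.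
  rewrite (Dmul_sum (G := fun u w => \sum_(t <- D u) f w (r t.1 t.2))); last by linsolve.
  apply: eq_bigr => p _; apply: eq_bigr => q _.
  by rewrite /PhiL (lin_sum _ _ (bilin_r hf _)).
under eq_bigr do under eq_bigr do rewrite Phi_eq.
rewrite /bullet /EQ /cop2 big_flatten !big_map big_allpairs_dep /=.
under [RHS]eq_bigr do under eq_bigr do rewrite big_flatten !big_map big_allpairs_dep /=.
under [RHS]eq_bigr do under eq_bigr do under eq_bigr do under eq_bigr do rewrite big_allpairs_dep /=.
symmetry.
transitivity (\sum_(P <- D a) \sum_(p <- D P.2) \sum_(U <- D P.1) \sum_(Q <- D b)
  \sum_(W <- D Q.1) \sum_(q <- D Q.2)
   f (p.1 * q.1) (r U.1 U.2 * r W.1 W.2 * symmetrization D r p.2 q.2)).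
  apply: eq_bigr => P _.
  rewrite [RHS]exchange_big; apply: eq_bigr => U _.
  rewrite [RHS]exchange_big; apply: eq_bigr => Q _.
  by rewrite [RHS]exchange_big.
rewrite (move3 (T := fun X o z => \sum_(U <- D X) \sum_(Q <- D b)
  \sum_(W <- D Q.1) \sum_(q <- D Q.2)
   f (o * q.1) (r U.1 U.2 * r W.1 W.2 * symmetrization D r z q.2))); last first.
  by apply: trilinP; rewrite /symmetrization /bconv /btr; linsolve.
apply: eq_bigr => p _ /=.
transitivity (\sum_(P <- D p.1) \sum_(U <- D P.1) \sum_(q <- D b) \sum_(Q <- D q.1)
  \sum_(W <- D Q.1)
   f (p.2 * q.2) (r U.1 U.2 * r W.1 W.2 * symmetrization D r P.2 Q.2)).
  apply: eq_bigr => P _; apply: eq_bigr => U _.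
  under eq_bigr do rewrite exchange_big.
  rewrite (move3 (T := fun Y o z => \sum_(W <- D Y)
     f (p.2 * o) (r U.1 U.2 * r W.1 W.2 * symmetrization D r P.2 z))) //.
  by apply: trilinP; rewrite /symmetrization /bconv /btr; linsolve.
transitivity (\sum_(q <- D b) \sum_(P <- D p.1) \sum_(U <- D P.1) \sum_(Q <- D q.1)
  \sum_(W <- D Q.1)
   f (p.2 * q.2) (r U.1 U.2 * r W.1 W.2 * symmetrization D r P.2 Q.2)); last first.
  apply: eq_bigr => q _.
  rewrite /PhiR lin_sum; last exact: (bilin_r hf).
  apply: eq_bigr => P _; rewrite lin_sum; last exact: (bilin_r hf).
  apply: eq_bigr => U _; rewrite lin_sum; last exact: (bilin_r hf).
  apply: eq_bigr => Q _; rewrite lin_sum; last exact: (bilin_r hf).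
  by [].
rewrite [RHS]exchange_big; apply: eq_bigr => P _.
by rewrite [RHS]exchange_big.
Qed.
End Main.

Theorem lemma2p6 (M : comAlgType CC) (D : M -> seq (M * M)) (eps : M -> CC)
    (S : M -> M) (A : comAlgType CC) (r : M -> M -> A) :
  is_hopf D eps S -> cocommutative D -> is_bicharacter D eps r ->
  forall a b : M,
    teqMA (EQ D r (a * b))
          (bullet D (symmetrization D r) (EQ D r a) (EQ D r b)).
Proof.
move=> hH hC hB a b V f hf.
by apply: (main_eq hH hC hB a b hf).
Qed.
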